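(* Assume (A1)–(A6) and (B1)–(B5). Let $y\in\mathbf K(\operatorname{dom}\mathcal R)$, let $\delta_n>0$ with $\delta_n\to0$, let $y_n\in\mathbb Y$ with $\mathcal D(y,y_n)\le\delta_n$, choose $\alpha_n>0$ with $\alpha_n\to0$ and $\delta_n/\alpha_n\to0$, and let $x_n\in\operatorname{arg\,min}\mathcal A_{\alpha_n,y_n}$. Then: (a) $(x_n)$ has at least one weakly convergent subsequence; (b) every weak accumulation point of $(x_n)$ is an $\mathcal R$-minimizing solution of $\mathbf Kx=y$; (c) for every weakly convergent subsequence $x_{\tau(n)}\rightharpoonup x_\star$ one has $\mathcal R(x_{\tau(n)})\to\mathcal R(x_\star)$; (d) if the $\mathcal R$-minimizing solution $x^\ddagger$ of $\mathbf Kx=y$ is unique, then $x_n\rightharpoonup x^\ddagger$.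
   Context: Standing assumptions (A1)–(A6): (A1) $\mathbb X,\mathbb Y$ real Hilbert spaces; (A2) $\Xi=\ell^2(\Lambda)$, $\Lambda$ countable; (A3) $\mathbf K\colon\mathbb X\to\mathbb Y$ weakly sequentially continuous; (A4) $\mathbf E\colon\mathbb X\to\Xi$ weakly sequentially continuous; (A5) $\mathbf D\colon\Xi\to\mathbb X$ weakly sequentially continuous; (A6) $\psi\colon\Xi\to[0,\infty]$ coercive (bounded values force bounded sequences) and weakly sequentially lower semicontinuous. Fix $c>0$ and set $\mathcal R(x)=\psi(\mathbf E(x))+\frac c2\|x-\mathbf D(\mathbf E(x))\|^2$, $\operatorname{dom}\mathcal R=\{x:\mathcal R(x)<\infty\}$, and $\mathcal A_{\alpha,y}(x)=\mathcal D(\mathbf Kx,y)+\alpha\mathcal R(x)$. An $\mathcal R$-minimizing solution of $\mathbf Kx=y$ is an element of $\operatorname{arg\,min}\{\mathcal R(x): x\in\operatorname{dom}\mathcal R,\ \mathbf Kx=y\}$. Similarity measure $\mathcal D\colon\mathbb Y\times\mathbb Y\to[0,\infty]$ with: (B1) $\mathcal D(y_0,y_1)=0\iff y_0=y_1$; (B2) sequential lower semicontinuity w.r.t. the weak topology in the first and the norm topology in the second argument; (B3) $\mathcal D(y,y_n)\to0\Rightarrow y_n\to y$; (B4) if $\mathcal D(y,y_n)\to0$ then $\mathcal D(z,y_n)\to\mathcal D(z,y)$ for every $z$ with $\mathcal D(z,y)<\infty$; (B5) for all $y$, $\alpha>0$ there is $x$ with $\mathcal A_{\alpha,y}(x)<\infty$.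 *)

(* Defs.v *)
From Stdlib Require Import Reals.
Open Scope R_scope.

Record Hilbert := {
  hcar :> Type;
  hzero : hcar;
  hadd : hcar -> hcar -> hcar;
  hopp : hcar -> hcar;
  hscal : R -> hcar -> hcar;
  hinner : hcar -> hcar -> R;
  hadd_assoc : forall x y z, hadd x (hadd y z) = hadd (hadd x y) z;
  hadd_comm : forall x y, hadd x y = hadd y x;
  hadd_zero : forall x, hadd hzero x = x;
  hadd_opp : forall x, hadd x (hopp x) = hzero;
  hscal_assoc : forall a b x, hscal a (hscal b x) = hscal (a * b) x;
  hscal_one : forall x, hscal 1 x = x;
  hscal_distr_r : forall a b x, hscal (a + b) x = hadd (hscal a x) (hscal b x);
  hscal_distr_l : forall a x y, hscal a (hadd x y) = hadd (hscal a x) (hscal a y);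
  hinner_sym : forall x y, hinner x y = hinner y x;
  hinner_add : forall x y z, hinner (hadd x y) z = hinner x z + hinner y z;
  hinner_scal : forall a x z, hinner (hscal a x) z = a * hinner x z;
  hinner_pos : forall x, 0 <= hinner x x;
  hinner_def : forall x, hinner x x = 0 -> x = hzero;
  hcomplete : forall u : nat -> hcar,
    (forall eps, eps > 0 -> exists N, forall m n, (N <= m)%nat -> (N <= n)%nat ->
        sqrt (hinner (hadd (u m) (hopp (u n))) (hadd (u m) (hopp (u n)))) < eps) ->
    exists l, Un_cv (fun n => sqrt (hinner (hadd (u n) (hopp l)) (hadd (u n) (hopp l)))) 0
}.

Arguments hzero {h}. Arguments hadd {h}. Arguments hopp {h}.
Arguments hscal {h}. Arguments hinner {h}.

Definition hsub {H : Hilbert} (x y : H) : H := hadd x (hopp y).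
Definition hnorm {H : Hilbert} (x : H) : R := sqrt (hinner x x).

Definition strong_cv {H : Hilbert} (u : nat -> H) (l : H) : Prop :=
  Un_cv (fun n => hnorm (hsub (u n) l)) 0.
Definition weak_cv {H : Hilbert} (u : nat -> H) (l : H) : Prop :=
  forall z : H, Un_cv (fun n => hinner (u n) z) (hinner l z).

Definition weak_seq_cont {H1 H2 : Hilbert} (F : H1 -> H2) : Prop :=
  forall (u : nat -> H1) (l : H1), weak_cv u l -> weak_cv (fun n => F (u n)) (F l).

Definition subseq_idx (tau : nat -> nat) : Prop := forall n, (tau n < tau (S n))%nat.

Definition eventually (P : nat -> Prop) : Prop := exists N, forall n, (N <= n)%nat -> P n.

(** ** Extended reals (we only use values in [0, +oo]) *)
Inductive ereal := Fin (r : R) | PInf.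

Definition ele (a b : ereal) : Prop :=
  match a, b with
  | Fin x, Fin y => x <= y
  | _, PInf => True
  | PInf, Fin _ => False
  end.
Definition elt (a b : ereal) : Prop :=
  match a, b with
  | Fin x, Fin y => x < y
  | Fin _, PInf => True
  | PInf, _ => False
  end.
Definition eadd (a b : ereal) : ereal :=
  match a, b with
  | Fin x, Fin y => Fin (x + y)
  | _, _ => PInf
  end.
(** scaling by a real number (used only with positive factors) *)
Definition escal (t : R) (a : ereal) : ereal :=
  match a with Fin x => Fin (t * x) | PInf => PInf end.

Definition efinite (a : ereal) : Prop := elt a PInf.
Definition enonneg (a : ereal) : Prop := ele (Fin 0) a.

Definition econv (u : nat -> ereal) (l : ereal) : Prop :=
  match l with
  | Fin r => forall eps, eps > 0 ->
       eventually (fun n => exists s, u n = Fin s /\ Rabs (s - r) < eps)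
  | PInf => forall M : R, eventually (fun n => elt (Fin M) (u n))
  end.

(** [ele a (liminf u)], written out: every real below [a] is eventually below [u n]. *)
Definition le_liminf (a : ereal) (u : nat -> ereal) : Prop :=
  forall r : R, elt (Fin r) a -> eventually (fun n => elt (Fin r) (u n)).

Definition coercive {H : Hilbert} (psi : H -> ereal) : Prop :=
  forall xi : nat -> H, (exists M, forall n, ele (psi (xi n)) (Fin M)) ->
    exists B, forall n, hnorm (xi n) <= B.
Definition weak_seq_lsc {H : Hilbert} (psi : H -> ereal) : Prop :=
  forall (u : nat -> H) (l : H), weak_cv u l -> le_liminf (psi l) (fun n => psi (u n)).

Definition Reg {X Xi : Hilbert} (E : X -> Xi) (Dd : Xi -> X) (psi : Xi -> ereal)
  (c : R) (x : X) : ereal :=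
  eadd (psi (E x)) (Fin (c / 2 * (hnorm (hsub x (Dd (E x)))) ^ 2)).

Definition Tik {X Y Xi : Hilbert} (K : X -> Y) (E : X -> Xi) (Dd : Xi -> X)
  (psi : Xi -> ereal) (c : R) (Dsim : Y -> Y -> ereal) (alpha : R) (y : Y) (x : X)
  : ereal :=
  eadd (Dsim (K x) y) (escal alpha (Reg E Dd psi c x)).

Definition Rmin_solution {X Y Xi : Hilbert} (K : X -> Y) (E : X -> Xi) (Dd : Xi -> X)
  (psi : Xi -> ereal) (c : R) (y : Y) (x : X) : Prop :=
  efinite (Reg E Dd psi c x) /\ K x = y /\
  forall z, efinite (Reg E Dd psi c z) -> K z = y ->
    ele (Reg E Dd psi c x) (Reg E Dd psi c z).

Definition sim_measure {X Y Xi : Hilbert} (K : X -> Y) (E : X -> Xi) (Dd : Xi -> X)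
  (psi : Xi -> ereal) (c : R) (Dsim : Y -> Y -> ereal) : Prop :=
  (forall y0 y1, enonneg (Dsim y0 y1))
  /\ (* B1 *) (forall y0 y1, Dsim y0 y1 = Fin 0 <-> y0 = y1)
  /\ (* B2 *) (forall (u v : nat -> Y) (a b : Y), weak_cv u a -> strong_cv v b ->
                 le_liminf (Dsim a b) (fun n => Dsim (u n) (v n)))
  /\ (* B3 *) (forall (y : Y) (v : nat -> Y), econv (fun n => Dsim y (v n)) (Fin 0) ->
                 strong_cv v y)
  /\ (* B4 *) (forall (y : Y) (v : nat -> Y), econv (fun n => Dsim y (v n)) (Fin 0) ->
                 forall z, efinite (Dsim z y) ->
                   econv (fun n => Dsim z (v n)) (Dsim z y))
  /\ (* B5 *) (forall (y : Y) (alpha : R), alpha > 0 ->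
                 exists x, efinite (Tik K E Dd psi c Dsim alpha y x)).

(* Main.v *)
Require Import Defs.
From Stdlib Require Import Reals Lra Lia Psatz ClassicalEpsilon Classical.
Open Scope R_scope.

Lemma subseq_mono (t : nat -> nat) : subseq_idx t -> forall m n, (m < n)%nat -> (t m < t n)%nat.
Proof.
  intros Ht m n Hmn. induction Hmn.
  - apply Ht.
  - specialize (Ht m0). lia.
Qed.

Lemma subseq_ge (t : nat -> nat) : subseq_idx t -> forall n, (n <= t n)%nat.
Proof. intros Ht n. induction n; [lia|]. specialize (Ht n). lia. Qed.

Lemma subseq_comp (t s : nat -> nat) : subseq_idx t -> subseq_idx s -> subseq_idx (fun n => t (s n)).
Proof. intros Ht Hs n. apply subseq_mono; auto. Qed.

Lemma subseq_id : subseq_idx (fun n => n).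
Proof. intro n; lia. Qed.

Lemma Un_cv_subseq (a : nat -> R) (l : R) (t : nat -> nat) :
  subseq_idx t -> Un_cv a l -> Un_cv (fun n => a (t n)) l.
Proof.
  intros Ht H eps He. destruct (H eps He) as [N HN]. exists N. intros n Hn.
  apply HN. pose proof (subseq_ge t Ht n). lia.
Qed.

Lemma BW_seq (a : nat -> R) (C : R) : (forall n, Rabs (a n) <= C) ->
  exists psi, subseq_idx psi /\ exists L, Un_cv (fun n => a (psi n)) L.
Proof.
  intros HC.
  destruct (Bolzano_Weierstrass a (fun c => -C <= c <= C) (compact_P3 (-C) C)) as [l Hl].
  { intro n. specialize (HC n). revert HC; unfold Rabs; destruct (Rcase_abs (a n)); lra. }
  assert (G : forall k N : nat, {p : nat | (N <= p)%nat /\ Rabs (a p - l) < / INR (S k)}).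
  { intros k N. apply constructive_indefinite_description.
    assert (Hp : 0 < / INR (S k)). { apply Rinv_0_lt_compat. apply lt_0_INR. lia. }
    destruct (Hl (disc l (mkposreal _ Hp)) N) as [p [Hp1 Hp2]].
    - exists (mkposreal _ Hp). intros z Hz. exact Hz.
    - exists p. split; auto. }
  set (psi := fix f (k : nat) : nat := match k with
                | O => proj1_sig (G O O)
                | S k' => proj1_sig (G (S k') (S (f k'))) end).
  exists psi. split.
  - intro n. simpl. pose proof (proj1 (proj2_sig (G (S n) (S (psi n))))). simpl in H. lia.
  - exists l. intros eps He. destruct (archimed_cor1 eps He) as [N [HN HN0]].
    exists N. intros n Hn. unfold Rdist.
    assert (Hb : Rabs (a (psi n) - l) < / INR (S n)).
    { destruct n; [exact (proj2 (proj2_sig (G 0%nat 0%nat)))|exact (proj2 (proj2_sig (G (S n) (S (psi n)))))]. }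
    apply Rlt_le_trans with (1 := Hb).
    apply Rlt_le, Rle_lt_trans with (2 := HN).
    apply Rinv_le_contravar. apply lt_0_INR; lia. apply le_INR; lia.
Qed.

Lemma diag_extract (a : nat -> nat -> R) :
  (forall k, exists C, forall n, Rabs (a k n) <= C) ->
  exists s, subseq_idx s /\ forall k, exists L, Un_cv (fun n => a k (s n)) L.
Proof.
  intros Hb.
  assert (P : forall (b : nat -> R), {psi : nat -> nat | subseq_idx psi /\
             ((exists C, forall n, Rabs (b n) <= C) -> exists L, Un_cv (fun n => b (psi n)) L)}).
  { intro b. apply constructive_indefinite_description.
    destruct (classic (exists C, forall n, Rabs (b n) <= C)) as [[C HC]|HC].
    - destruct (BW_seq b C HC) as [psi [H1 H2]]. exists psi. split; auto.
    - exists (fun n => n). split; [apply subseq_id| tauto]. }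
  set (phi := fix f (k : nat) : nat -> nat := match k with
              | O => proj1_sig (P (a O))
              | S k' => fun n => f k' (proj1_sig (P (fun m => a (S k') (f k' m))) n) end).
  assert (Hphi : forall k, subseq_idx (phi k)).
  { induction k; simpl.
    - exact (proj1 (proj2_sig (P (a 0%nat)))).
    - apply subseq_comp; auto. exact (proj1 (proj2_sig (P (fun m => a (S k) (phi k m))))). }
  assert (Hcv : forall k, exists L, Un_cv (fun n => a k (phi k n)) L).
  { destruct k; simpl.
    - apply (proj2 (proj2_sig (P (a 0%nat)))), Hb.
    - apply (proj2 (proj2_sig (P (fun m => a (S k) (phi k m))))).
      destruct (Hb (S k)) as [C HC]. exists C. intro; apply HC. }
  assert (Hfac : forall j k, exists g, subseq_idx g /\ forall m, phi (k + j)%nat m = phi k (g m)).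
  { induction j; intro k.
    - exists (fun n => n). split; [apply subseq_id|]. intro m. rewrite Nat.add_0_r. reflexivity.
    - destruct (IHj k) as [g [Hg Hg2]]. rewrite Nat.add_succ_r. simpl.
      pose proof (proj1 (proj2_sig (P (fun m => a (S (k + j)) (phi (k + j)%nat m))))) as Hp.
      set (p := proj1_sig (P (fun m => a (S (k + j)) (phi (k + j)%nat m)))) in *.
      exists (fun n => g (p n)). split; [apply subseq_comp; auto|].
      intro m. apply Hg2. }
  exists (fun n => phi n n). split.
  - intro n. simpl.
    pose proof (proj1 (proj2_sig (P (fun m => a (S n) (phi n m))))) as Hp.
    set (p := proj1_sig (P (fun m => a (S n) (phi n m)))) in *.
    apply subseq_mono; [apply Hphi|]. pose proof (subseq_ge p Hp (S n)). lia.
  - intro k. destruct (Hcv k) as [L HL]. exists L. intros eps He.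
    destruct (HL eps He) as [N HN]. exists (N + k)%nat. intros n Hn.
    destruct (Hfac (n - k)%nat k) as [g [Hg Hg2]].
    assert (En : phi n n = phi (k + (n - k))%nat n) by (f_equal; lia). rewrite En, Hg2.
    apply HN. pose proof (subseq_ge g Hg n). lia.
Qed.
Arguments hadd_assoc {h}. Arguments hadd_comm {h}. Arguments hadd_zero {h}. Arguments hadd_opp {h}.
Arguments hscal_assoc {h}. Arguments hscal_one {h}. Arguments hscal_distr_r {h}. Arguments hscal_distr_l {h}.
Arguments hinner_sym {h}. Arguments hinner_add {h}. Arguments hinner_scal {h}. Arguments hinner_pos {h}.
Arguments hinner_def {h}. Arguments hcomplete {h}.

Lemma hadd_zero_r {H : Hilbert} (x : H) : hadd x hzero = x.
Proof. rewrite hadd_comm. apply hadd_zero. Qed.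

Lemma hadd_cancel_l {H : Hilbert} (a x y : H) : hadd a x = hadd a y -> x = y.
Proof.
  intro E. assert (E2 : hadd (hopp a) (hadd a x) = hadd (hopp a) (hadd a y)) by now rewrite E.
  rewrite !hadd_assoc, (hadd_comm (hopp a) a), hadd_opp, !hadd_zero in E2. exact E2.
Qed.

Lemma hscal_zero {H : Hilbert} (x : H) : hscal 0 x = hzero.
Proof.
  apply (hadd_cancel_l (hscal 0 x)). rewrite <- hscal_distr_r, Rplus_0_r, hadd_zero_r. reflexivity.
Qed.

Lemma hopp_scal {H : Hilbert} (x : H) : hopp x = hscal (-1) x.
Proof.
  apply (hadd_cancel_l x). rewrite hadd_opp. rewrite <- (hscal_one x) at 1.
  rewrite <- hscal_distr_r. replace (1 + -1) with 0 by ring. now rewrite hscal_zero.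
Qed.

Lemma hinner_add_r {H : Hilbert} (x y z : H) : hinner z (hadd x y) = hinner z x + hinner z y.
Proof. rewrite !(hinner_sym z). apply hinner_add. Qed.
Lemma hinner_scal_r {H : Hilbert} a (x z : H) : hinner z (hscal a x) = a * hinner z x.
Proof. rewrite !(hinner_sym z). apply hinner_scal. Qed.
Lemma hinner_opp {H : Hilbert} (x z : H) : hinner (hopp x) z = - hinner x z.
Proof. rewrite hopp_scal, hinner_scal. ring. Qed.
Lemma hinner_opp_r {H : Hilbert} (x z : H) : hinner z (hopp x) = - hinner z x.
Proof. rewrite !(hinner_sym z). apply hinner_opp. Qed.
Lemma hinner_zero {H : Hilbert} (z : H) : hinner hzero z = 0.
Proof. rewrite <- (hscal_zero z), hinner_scal. ring. Qed.
Lemma hinner_zero_r {H : Hilbert} (z : H) : hinner z hzero = 0.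
Proof. rewrite hinner_sym. apply hinner_zero. Qed.
Lemma hinner_sub {H : Hilbert} (x y z : H) : hinner (hsub x y) z = hinner x z - hinner y z.
Proof. unfold hsub. rewrite hinner_add, hinner_opp. ring. Qed.
Lemma hinner_sub_r {H : Hilbert} (x y z : H) : hinner z (hsub x y) = hinner z x - hinner z y.
Proof. rewrite !(hinner_sym z). apply hinner_sub. Qed.

Definition nsq {H : Hilbert} (x : H) : R := hinner x x.

Lemma nsq_pos {H : Hilbert} (x : H) : 0 <= nsq x.
Proof. apply hinner_pos. Qed.

Lemma nsq_add {H : Hilbert} (a b : H) : nsq (hadd a b) = nsq a + 2 * hinner a b + nsq b.
Proof. unfold nsq. rewrite hinner_add, !hinner_add_r, (hinner_sym b a). ring. Qed.
Lemma nsq_sub {H : Hilbert} (a b : H) : nsq (hsub a b) = nsq a - 2 * hinner a b + nsq b.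
Proof. unfold nsq. rewrite !hinner_sub, !hinner_sub_r, (hinner_sym b a). ring. Qed.
Lemma nsq_scal {H : Hilbert} t (a : H) : nsq (hscal t a) = t * t * nsq a.
Proof. unfold nsq. rewrite hinner_scal, hinner_scal_r. ring. Qed.

Lemma cauchy_schwarz {H : Hilbert} (a b : H) : hinner a b * hinner a b <= nsq a * nsq b.
Proof.
  destruct (Req_dec (nsq b) 0) as [E|E].
  - apply hinner_def in E. subst b. unfold nsq. rewrite !hinner_zero_r. lra.
  - assert (Hb : 0 < nsq b) by (pose proof (nsq_pos b); lra).
    set (t := - hinner a b / nsq b).
    pose proof (nsq_pos (hadd a (hscal t b))) as P.
    rewrite nsq_add, nsq_scal, hinner_scal_r in P.
    unfold t in P. field_simplify in P; [|lra].
    assert (Q : 0 <= (nsq a * nsq b - hinner a b ^ 2) / nsq b * nsq b) by (apply Rmult_le_pos; lra).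
    replace ((nsq a * nsq b - hinner a b ^ 2) / nsq b * nsq b) with (nsq a * nsq b - hinner a b ^ 2) in Q
      by (field; lra). nra.
Qed.

Lemma nsq_add_le {H : Hilbert} (a b : H) : nsq (hadd a b) <= 2 * nsq a + 2 * nsq b.
Proof.
  rewrite nsq_add. pose proof (nsq_pos (hsub a b)) as P. rewrite nsq_sub in P. lra.
Qed.

Lemma hsub_split {H : Hilbert} (a b c : H) : hsub a c = hadd (hsub a b) (hsub b c).
Proof.
  unfold hsub. rewrite <- hadd_assoc, (hadd_assoc (hopp b)), (hadd_comm (hopp b) b), hadd_opp,
    hadd_zero. reflexivity.
Qed.

Lemma nsq_tri {H : Hilbert} (a b c : H) : nsq (hsub a c) <= 2 * nsq (hsub a b) + 2 * nsq (hsub b c).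
Proof. rewrite (hsub_split a b c). apply nsq_add_le. Qed.

Lemma inner_bound {H : Hilbert} (a b : H) (B : R) : nsq a <= B ->
  hinner a b * hinner a b <= B * nsq b.
Proof. intro HB. pose proof (cauchy_schwarz a b). pose proof (nsq_pos b). nra. Qed.

Lemma hsub_self {H : Hilbert} (a : H) : hsub a a = hzero.
Proof. apply hadd_opp. Qed.

Lemma nsq_zero_eq {H : Hilbert} (a b : H) : nsq (hsub a b) = 0 -> a = b.
Proof.
  intro E. apply hinner_def in E. unfold hsub in E.
  apply (hadd_cancel_l (hopp b)). rewrite hadd_comm, E, hadd_comm, hadd_opp. reflexivity.
Qed.

Ltac hexpand := unfold nsq, hsub in *;
  repeat rewrite ?hinner_add, ?hinner_add_r, ?hinner_opp, ?hinner_opp_r, ?hinner_scal, ?hinner_scal_r,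
     ?hinner_zero, ?hinner_zero_r in *.
Ltac hsym := repeat match goal with
  | |- context [hinner ?x ?y] => match goal with
       | |- context [hinner y x] => tryif constr_eq x y then fail else rewrite (hinner_sym y x)
       end
  end.

Lemma veq {H : Hilbert} (a b : H) : nsq (hsub a b) = 0 -> a = b.
Proof. apply nsq_zero_eq. Qed.

Lemma test {H : Hilbert} (a b s t : H) : hsub (hadd a b) (hadd s t) = hadd (hsub a s) (hsub b t).
Proof. apply veq. hexpand. hsym. ring. Qed.

Definition scv {H : Hilbert} (u : nat -> H) (l : H) : Prop :=
  forall eps, eps > 0 -> exists N, forall n, (N <= n)%nat -> nsq (hsub (u n) l) < eps.

Lemma complete_sq {H : Hilbert} (u : nat -> H) :
  (forall eps, eps > 0 -> exists N, forall m n, (N <= m)%nat -> (N <= n)%nat -> nsq (hsub (u m) (u n)) < eps) ->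
  exists l, scv u l.
Proof.
  intro Hc. destruct (hcomplete u) as [l Hl].
  - intros eps He. destruct (Hc (eps * eps)) as [N HN]; [nra|]. exists N. intros m n Hm Hn.
    specialize (HN m n Hm Hn). rewrite <- (sqrt_square eps) by lra.
    apply sqrt_lt_1_alt. split; [apply hinner_pos| exact HN].
  - exists l. intros eps He. destruct (Hl (sqrt eps)) as [N HN]; [apply sqrt_lt_R0; lra|].
    exists N. intros n Hn. specialize (HN n Hn). unfold Rdist in HN. rewrite Rminus_0_r in HN.
    rewrite Rabs_right in HN by (apply Rle_ge, sqrt_pos). apply sqrt_lt_0_alt. exact HN.
Qed.

Lemma inv_cv0 : Un_cv (fun n => / INR (S n)) 0.
Proof.
  intros eps He. destruct (archimed_cor1 eps He) as [N [HN HN0]]. exists N. intros n Hn.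
  unfold Rdist. rewrite Rminus_0_r. rewrite Rabs_right.
  - apply Rle_lt_trans with (2 := HN). apply Rinv_le_contravar. apply lt_0_INR; lia. apply le_INR; lia.
  - apply Rle_ge, Rlt_le, Rinv_0_lt_compat, lt_0_INR; lia.
Qed.

Lemma quad_zero (G q : R) : 0 <= q -> (forall t, 0 <= t * G + t * t * q / 2) -> G = 0.
Proof.
  intros Hq Ht. specialize (Ht (- G / (q + 1))).
  assert (E : - G / (q + 1) * G + - G / (q + 1) * (- G / (q + 1)) * q / 2 =
              - (G * G) * (q + 2) / (2 * (q + 1) * (q + 1))) by (field; lra).
  rewrite E in Ht. 
  assert (P : 0 < 2 * (q + 1) * (q + 1)) by nra.
  assert (0 <= - (G * G) * (q + 2)).
  { apply Rmult_le_reg_r with (/ (2 * (q + 1) * (q + 1))). apply Rinv_0_lt_compat; lra.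
    rewrite Rmult_0_l. exact Ht. }
  nra.
Qed.

Lemma riesz_sub {H : Hilbert} (M : H -> Prop) (F : H -> R) (C : R) :
  M hzero ->
  (forall a b, M a -> M b -> M (hadd a b)) ->
  (forall t a, M a -> M (hscal t a)) ->
  (forall u l, (forall n, M (u n)) -> scv u l -> M l) ->
  (forall a b, M a -> M b -> F (hadd a b) = F a + F b) ->
  (forall t a, M a -> F (hscal t a) = t * F a) ->
  0 <= C -> (forall a, M a -> F a * F a <= C * nsq a) ->
  exists x, M x /\ forall v, M v -> hinner x v = F v.
Proof.
  intros M0 Madd Mscal Mcl Fadd Fscal HC Fb.
  set (J := fun v => nsq v / 2 - F v).
  assert (Jlow : forall v, M v -> - C / 2 <= J v).
  { intros v Mv. specialize (Fb v Mv). pose proof (nsq_pos v). unfold J.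
    assert (F v <= (C + nsq v) / 2).
    { apply Rnot_lt_le. intro Hl. pose proof (Rle_0_sqr (C - nsq v)) as Sq. unfold Rsqr in Sq.
      assert ((C + nsq v) / 2 * ((C + nsq v) / 2) < F v * F v) by (apply Rmult_le_0_lt_compat; lra).
      nra. }
    lra. }
  set (Sset := fun r => exists v, M v /\ r = - J v).
  destruct (completeness Sset) as [s [Hs1 Hs2]].
  { exists (C / 2). intros r [v [Mv ->]]. specialize (Jlow v Mv). lra. }
  { exists (- J hzero). exists hzero. split; auto. }
  assert (Hm : forall v, M v -> - s <= J v).
  { intros v Mv. assert (Sset (- J v)) by (exists v; auto). specialize (Hs1 _ H0). lra. }
  assert (Hv : forall n : nat, exists v, M v /\ J v < - s + / INR (S n)).
  { intro n. apply NNPP. intro Hn.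
    assert (Hpos : 0 < / INR (S n)) by (apply Rinv_0_lt_compat, lt_0_INR; lia).
    assert (is_upper_bound Sset (s - / INR (S n))).
    { intros r [v [Mv ->]]. apply Rnot_lt_le. intro Hl. apply Hn. exists v. split; auto. lra. }
    specialize (Hs2 _ H0). lra. }
  set (v := fun n => proj1_sig (constructive_indefinite_description _ (Hv n))).
  assert (Mvn : forall n, M (v n)) by (intro n; exact (proj1 (proj2_sig (constructive_indefinite_description _ (Hv n))))).
  assert (Jvn : forall n, J (v n) < - s + / INR (S n)) by (intro n; exact (proj2 (proj2_sig (constructive_indefinite_description _ (Hv n))))).
  clearbody v.
  assert (Fsub : forall a b, M a -> M b -> F (hsub a b) = F a - F b).
  { intros a b Ma Mb. unfold hsub. rewrite hopp_scal, Fadd, Fscal; auto. ring. }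
  assert (par : forall a b, M a -> M b -> nsq (hsub a b) / 4 <= J a + J b + 2 * s).
  { intros a b Ma Mb. set (c := hscal (/ 2) (hadd a b)).
    assert (Mc : M c) by (apply Mscal, Madd; auto).
    specialize (Hm c Mc). unfold J in *. unfold c in Hm. rewrite Fscal, Fadd, nsq_scal in Hm by auto.
    rewrite nsq_add in Hm. rewrite nsq_sub. lra. }
  destruct (complete_sq v) as [x Hx].
  { intros eps He. destruct (archimed_cor1 (eps / 8)) as [N [HN HN0]]; [lra|].
    exists N. intros m n Hm1 Hn1. specialize (par _ _ (Mvn m) (Mvn n)).
    pose proof (Jvn m). pose proof (Jvn n).
    assert (/ INR (S m) <= / INR N) by (apply Rinv_le_contravar; [apply lt_0_INR; lia| apply le_INR; lia]).
    assert (/ INR (S n) <= / INR N) by (apply Rinv_le_contravar; [apply lt_0_INR; lia| apply le_INR; lia]).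
    lra. }
  assert (Mx : M x) by (apply (Mcl v); auto).
  exists x. split; auto. intros z Mz.
  assert (Hgz : Un_cv (fun n => hinner (v n) z) (hinner x z)).
  { intros eps He. destruct (Hx (eps * eps / (nsq z + 1))) as [N HN].
    { apply Rdiv_lt_0_compat. nra. pose proof (nsq_pos z); lra. }
    exists N. intros n Hn. specialize (HN n Hn). unfold Rdist.
    pose proof (inner_bound (hsub (v n) x) z _ (Rlt_le _ _ HN)) as P.
    rewrite hinner_sub in P. pose proof (nsq_pos z).
    assert (P2 : (hinner (v n) z - hinner x z) * (hinner (v n) z - hinner x z) < eps * eps).
    { apply Rle_lt_trans with (1 := P).
      apply Rlt_le_trans with (eps * eps / (nsq z + 1) * (nsq z + 1)).
      - apply Rmult_lt_compat_l. apply Rdiv_lt_0_compat; nra. lra.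
      - right. field. lra. }
    apply Rsqr_lt_abs_0 in P2. rewrite (Rabs_right eps) in P2 by lra. exact P2. }
  apply Rminus_diag_uniq. apply (quad_zero _ (nsq z) (nsq_pos z)). intro t.
  apply (Rle_cv_lim (Un := fun n => - / INR (S n)) (Vn := fun n => t * (hinner (v n) z - F z) + t * t * nsq z / 2)).
  - intro n. specialize (Hm (hadd (v n) (hscal t z)) (Madd _ _ (Mvn n) (Mscal _ _ Mz))).
    specialize (Jvn n). unfold J in *. rewrite Fadd, Fscal, nsq_add, nsq_scal, hinner_scal_r in Hm by auto.
    lra.
  - replace 0 with (- 0) by ring. apply CV_opp, inv_cv0.
  - apply CV_plus. 2: { intros e He; exists 0%nat; intros; unfold Rdist; rewrite Rminus_diag, Rabs_R0; lra. }
    apply CV_mult. { intros e He; exists 0%nat; intros; unfold Rdist; rewrite Rminus_diag, Rabs_R0; lra. }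
    apply CV_minus; auto. intros e He; exists 0%nat; intros; unfold Rdist; rewrite Rminus_diag, Rabs_R0; lra.
Qed.

Inductive span {H : Hilbert} (u : nat -> H) : H -> Prop :=
| sp_base k : span u (u k)
| sp_zero : span u hzero
| sp_add a b : span u a -> span u b -> span u (hadd a b)
| sp_scal t a : span u a -> span u (hscal t a).

Lemma nsq_sub_sym {H : Hilbert} (a b : H) : nsq (hsub a b) = nsq (hsub b a).
Proof. rewrite !nsq_sub, (hinner_sym b a). ring. Qed.

Lemma cv_const (c : R) : Un_cv (fun _ => c) c.
Proof. intros e He; exists 0%nat; intros; unfold Rdist; rewrite Rminus_diag, Rabs_R0; lra. Qed.

Lemma cv_ext (a b : nat -> R) l : (forall n, a n = b n) -> Un_cv a l -> Un_cv b l.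
Proof. intros E Ha e He. destruct (Ha e He) as [N HN]. exists N. intros n Hn. rewrite <- E. auto. Qed.

Lemma abs_from_sq (a e : R) : 0 < e -> a * a < e * e -> Rabs a < e.
Proof. intros He P. apply Rsqr_lt_abs_0 in P. rewrite (Rabs_right e) in P by lra. exact P. Qed.

Theorem weak_compact {H : Hilbert} (u : nat -> H) (B : R) :
  (forall n, nsq (u n) <= B) ->
  exists s xs, subseq_idx s /\ weak_cv (fun n => u (s n)) xs.
Proof.
  intro HB.
  assert (B0 : 0 <= B) by (pose proof (nsq_pos (u 0%nat)); specialize (HB 0%nat); lra).
  destruct (diag_extract (fun k n => hinner (u n) (u k))) as [sg [Hsg Hcv]].
  { intro k. exists (Rabs B). intro n. apply Rsqr_le_abs_0. unfold Rsqr.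
    pose proof (inner_bound (u n) (u k) B (HB n)). specialize (HB k). nra. }
  set (w := fun n => u (sg n)).
  assert (Hw : forall n, nsq (w n) <= B) by (intro; apply HB).
  assert (Hspan : forall s, span u s -> exists L, Un_cv (fun n => hinner (w n) s) L).
  { induction 1.
    - apply (Hcv k).
    - exists 0. apply (cv_ext (fun _ => 0)); [intro; symmetry; apply hinner_zero_r| apply cv_const].
    - destruct IHspan1 as [L1 H1], IHspan2 as [L2 H2]. exists (L1 + L2).
      apply (cv_ext (fun n => hinner (w n) a + hinner (w n) b)); [intro; symmetry; apply hinner_add_r|].
      apply CV_plus; auto.
    - destruct IHspan as [L1 H1]. exists (t * L1).
      apply (cv_ext (fun n => t * hinner (w n) a)); [intro; symmetry; apply hinner_scal_r|].
      apply CV_mult; auto. apply cv_const. }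
  set (M := fun v : H => forall eps, eps > 0 -> exists s, span u s /\ nsq (hsub v s) < eps).
  assert (Mspan : forall s, span u s -> M s).
  { intros s Hs eps He. exists s. split; auto. rewrite hsub_self. unfold nsq. rewrite hinner_zero. lra. }
  assert (Mcv : forall v, M v -> exists L, Un_cv (fun n => hinner (w n) v) L).
  { intros v Mv. cut (Cauchy_crit (fun n => hinner (w n) v)). { intro Hc. destruct (R_complete _ Hc) as [L HL]. exists L; exact HL. } intros eps He.
    destruct (Mv (eps * eps / (9 * (B + 1)))) as [s [Hs Hvs]].
    { apply Rdiv_lt_0_compat; nra. }
    destruct (Hspan s Hs) as [L HL].
    destruct (CV_Cauchy _ (exist _ L HL) (eps / 3)) as [N HN]; [lra|].
    exists N. intros n m Hn Hm. specialize (HN n m Hn Hm). unfold Rdist in *.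
    assert (Bd : forall k, Rabs (hinner (w k) v - hinner (w k) s) < eps / 3).
    { intro k. apply abs_from_sq; [lra|]. rewrite <- hinner_sub_r, (hinner_sym (w k)).
      pose proof (inner_bound (hsub v s) (w k) _ (Rlt_le _ _ Hvs)) as P.
      apply Rle_lt_trans with (1 := P). pose proof (Hw k). pose proof (nsq_pos (w k)).
      apply Rle_lt_trans with (eps * eps / (9 * (B + 1)) * B).
      - apply Rmult_le_compat_l; [|lra]. apply Rlt_le, Rdiv_lt_0_compat; nra.
      - apply Rlt_le_trans with (eps * eps / (9 * (B + 1)) * (B + 1)).
        + apply Rmult_lt_compat_l; [apply Rdiv_lt_0_compat; nra| lra].
        + right. field. lra. }
    pose proof (Bd n) as B1. pose proof (Bd m) as B2.
    replace (hinner (w n) v - hinner (w m) v) with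
      ((hinner (w n) v - hinner (w n) s) + (hinner (w n) s - hinner (w m) s) - (hinner (w m) v - hinner (w m) s)) by ring.
    eapply Rle_lt_trans; [apply Rabs_triang|]. rewrite Rabs_Ropp.
    eapply Rle_lt_trans; [apply Rplus_le_compat_r, Rabs_triang|]. lra. }
  assert (Fex : forall v, exists L, M v -> Un_cv (fun n => hinner (w n) v) L).
  { intro v. destruct (classic (M v)) as [Mv|Mv].
    - destruct (Mcv v Mv) as [L HL]. exists L. auto.
    - exists 0. tauto. }
  set (F := fun v => proj1_sig (constructive_indefinite_description _ (Fex v))).
  assert (HF : forall v, M v -> Un_cv (fun n => hinner (w n) v) (F v))
    by (intro v; exact (proj2_sig (constructive_indefinite_description _ (Fex v)))).
  clearbody F.
  assert (Madd : forall a b, M a -> M b -> M (hadd a b)).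
  { intros a b Ma Mb eps He. destruct (Ma (eps / 4)) as [s [Hs1 Hs2]]; [lra|].
    destruct (Mb (eps / 4)) as [t [Ht1 Ht2]]; [lra|]. exists (hadd s t). split; [constructor; auto|].
    assert (E : hsub (hadd a b) (hadd s t) = hadd (hsub a s) (hsub b t)) by (apply veq; hexpand; hsym; ring).
    rewrite E. pose proof (nsq_add_le (hsub a s) (hsub b t)). lra. }
  assert (Mscal : forall c a, M a -> M (hscal c a)).
  { intros c a Ma eps He. destruct (Ma (eps / (c * c + 1))) as [s [Hs1 Hs2]].
    { apply Rdiv_lt_0_compat; nra. }
    exists (hscal c s). split; [constructor; auto|].
    assert (E : hsub (hscal c a) (hscal c s) = hscal c (hsub a s)) by (apply veq; hexpand; hsym; ring).
    rewrite E, nsq_scal. assert (Hk : eps / (c * c + 1) * (c * c + 1) = eps) by (field; nra).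
    pose proof (nsq_pos (hsub a s)). nra. }
  assert (M0 : M hzero) by (apply Mspan; constructor).
  assert (Mcl : forall v l, (forall n, M (v n)) -> scv v l -> M l).
  { intros v l Mv Hvl eps He. destruct (Hvl (eps / 4)) as [N HN]; [lra|].
    destruct (Mv N (eps / 4)) as [s [Hs1 Hs2]]; [lra|]. exists s. split; auto.
    pose proof (nsq_tri l (v N) s). rewrite (nsq_sub_sym l (v N)) in H0.
    specialize (HN N (le_n _)). lra. }
  destruct (riesz_sub M F B M0 Madd Mscal Mcl) as [x [Mx Hx]]; auto.
  { intros a b Ma Mb. apply (UL_sequence (fun n => hinner (w n) (hadd a b))); auto.
    apply (cv_ext (fun n => hinner (w n) a + hinner (w n) b)); [intro; symmetry; apply hinner_add_r|].
    apply CV_plus; auto. }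
  { intros t a Ma. apply (UL_sequence (fun n => hinner (w n) (hscal t a))); auto.
    apply (cv_ext (fun n => t * hinner (w n) a)); [intro; symmetry; apply hinner_scal_r|].
    apply CV_mult; auto. apply cv_const. }
  { intros a Ma. apply (Rle_cv_lim (Un := fun n => hinner (w n) a * hinner (w n) a) (Vn := fun _ => B * nsq a)).
    - intro n. apply inner_bound. apply Hw.
    - apply CV_mult; auto.
    - apply cv_const. }
  exists sg, x. split; auto. intro z.
  destruct (riesz_sub M (fun v => hinner z v) (nsq z) M0 Madd Mscal Mcl) as [p [Mp Hp]].
  { intros; apply hinner_add_r. }
  { intros; apply hinner_scal_r. }
  { apply nsq_pos. }
  { intros a Ma. apply cauchy_schwarz. }
  assert (E : forall n, hinner (w n) p = hinner (u (sg n)) z).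
  { intro n. rewrite hinner_sym, Hp by (apply Mspan; unfold w; apply sp_base). apply hinner_sym. }
  apply (cv_ext _ _ _ E).
  replace (hinner x z) with (F p) by (rewrite <- (Hx p Mp), hinner_sym, (Hp x Mx); apply hinner_sym).
  apply HF. exact Mp.
Qed.

Lemma hnorm_sq {H : Hilbert} (v : H) : hnorm v ^ 2 = nsq v.
Proof. unfold hnorm, nsq. apply pow2_sqrt, hinner_pos. Qed.

Lemma ele_not (a b : ereal) : ~ ele a b -> elt b a.
Proof. destruct a, b; simpl; try tauto. intro; lra. Qed.

Lemma eventually_and (P Q : nat -> Prop) : eventually P -> eventually Q -> eventually (fun n => P n /\ Q n).
Proof. intros [N1 H1] [N2 H2]. exists (max N1 N2). intros n Hn. split; [apply H1|apply H2]; lia. Qed.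

Lemma cv_eventually_lt (u : nat -> R) l r : Un_cv u l -> l < r -> eventually (fun n => u n < r).
Proof.
  intros Hu Hl. destruct (Hu (r - l)) as [N HN]; [lra|]. exists N. intros n Hn.
  specialize (HN n Hn). unfold Rdist in HN. pose proof (Rle_abs (u n - l)). lra.
Qed.

Lemma cv_eventually_gt (u : nat -> R) l r : Un_cv u l -> r < l -> eventually (fun n => r < u n).
Proof.
  intros Hu Hl. destruct (Hu (l - r)) as [N HN]; [lra|]. exists N. intros n Hn.
  specialize (HN n Hn). unfold Rdist in HN. pose proof (Rle_abs (- (u n - l))). rewrite Rabs_Ropp in H. lra.
Qed.

Lemma cv_bounded (u : nat -> R) l : Un_cv u l -> exists B, forall n, u n <= B.
Proof.
  intro Hu. destruct (Hu 1) as [N HN]; [lra|].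
  assert (Hlow : forall M, exists B, forall n, (n < M)%nat -> u n <= B).
  { induction M. - exists 0. intros; lia.
    - destruct IHM as [B HB]. exists (Rmax B (u M)). intros n Hn.
      destruct (Nat.eq_dec n M). + subst. apply Rmax_r. + apply Rle_trans with B; [apply HB; lia| apply Rmax_l]. }
  destruct (Hlow N) as [B HB]. exists (Rmax B (l + 1)). intro n. destruct (Compare_dec.le_lt_dec N n).
  - specialize (HN n l0). unfold Rdist in HN. pose proof (Rle_abs (u n - l)).
    apply Rle_trans with (l + 1); [lra| apply Rmax_r].
  - apply Rle_trans with B; [auto| apply Rmax_l].
Qed.

Lemma weak_cv_add {H : Hilbert} (a b : nat -> H) la lb :
  weak_cv a la -> weak_cv b lb -> weak_cv (fun n => hadd (a n) (b n)) (hadd la lb).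
Proof.
  intros Ha Hb z. rewrite hinner_add.
  apply (cv_ext (fun n => hinner (a n) z + hinner (b n) z)); [intro; symmetry; apply hinner_add|].
  apply CV_plus; auto.
Qed.

Lemma weak_cv_sub {H : Hilbert} (a b : nat -> H) la lb :
  weak_cv a la -> weak_cv b lb -> weak_cv (fun n => hsub (a n) (b n)) (hsub la lb).
Proof.
  intros Ha Hb z. rewrite hinner_sub.
  apply (cv_ext (fun n => hinner (a n) z - hinner (b n) z)); [intro; symmetry; apply hinner_sub|].
  apply CV_minus; auto.
Qed.

Lemma weak_cv_subseq {H : Hilbert} (a : nat -> H) l t : subseq_idx t -> weak_cv a l -> weak_cv (fun n => a (t n)) l.
Proof. intros Ht Ha z. apply (Un_cv_subseq (fun n => hinner (a n) z)); auto. Qed.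

Lemma nsq_lsc {H : Hilbert} (a : nat -> H) b r : weak_cv a b -> r < nsq b -> eventually (fun n => r < nsq (a n)).
Proof.
  intros Ha Hr.
  assert (Hc : Un_cv (fun n => 2 * hinner (a n) b - nsq b) (2 * nsq b - nsq b)).
  { apply CV_minus; [apply CV_mult; [apply cv_const| apply Ha]| apply cv_const]. }
  destruct (cv_eventually_gt _ _ r Hc) as [N HN]; [lra|]. exists N. intros n Hn. specialize (HN n Hn).
  pose proof (nsq_pos (hsub (a n) b)). rewrite nsq_sub in H0. lra.
Qed.

Lemma le_liminf_add (a : ereal) (u : nat -> ereal) (b : R) (v : nat -> R) :
  le_liminf a u -> (forall r, r < b -> eventually (fun n => r < v n)) ->
  le_liminf (eadd a (Fin b)) (fun n => eadd (u n) (Fin (v n))).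
Proof.
  intros Hu Hv r Hr. destruct a as [a|].
  - simpl in Hr. set (h := (a + b - r) / 2).
    destruct (eventually_and _ _ (Hu (a - h) ltac:(simpl; unfold h; lra)) (Hv (b - h) ltac:(unfold h; lra))) as [N HN].
    exists N. intros n Hn. destruct (HN n Hn) as [H1 H2]. destruct (u n); simpl in *; auto. unfold h in *; lra.
  - destruct (eventually_and _ _ (Hu (r - b + 1) I) (Hv (b - 1) ltac:(lra))) as [N HN].
    exists N. intros n Hn. destruct (HN n Hn) as [H1 H2]. destruct (u n); simpl in *; auto. lra.
Qed.

Lemma weak_limit_unique {H : Hilbert} (a : nat -> H) l1 l2 : weak_cv a l1 -> weak_cv a l2 -> l1 = l2.
Proof.
  intros H1 H2. apply veq. unfold nsq. rewrite hinner_sub.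
  rewrite (UL_sequence _ _ _ (H1 (hsub l1 l2)) (H2 (hsub l1 l2))). ring.
Qed.

Lemma weak_cv_ext {H : Hilbert} (a b : nat -> H) l : (forall n, a n = b n) -> weak_cv a l -> weak_cv b l.
Proof. intros E Ha z. apply (cv_ext (fun n => hinner (a n) z)); [intro n; now rewrite E| apply Ha]. Qed.

Lemma le_liminf_ext (a : ereal) (u v : nat -> ereal) : (forall n, u n = v n) -> le_liminf a u -> le_liminf a v.
Proof. intros E Hu r Hr. destruct (Hu r Hr) as [N HN]. exists N. intros n Hn. rewrite <- E. auto. Qed.

Theorem mainTheorem7
  (X Y Xi : Hilbert) (K : X -> Y) (E : X -> Xi) (Dd : Xi -> X) (psi : Xi -> ereal)
  (c : R) (Dsim : Y -> Y -> ereal)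
  (HK : weak_seq_cont K) (HE : weak_seq_cont E) (HD : weak_seq_cont Dd)
  (Hpsi_nonneg : forall xi, enonneg (psi xi))
  (Hpsi_coer : coercive psi) (Hpsi_lsc : weak_seq_lsc psi)
  (Hc : c > 0)
  (HB : sim_measure K E Dd psi c Dsim)
  (y : Y) (Hy : exists x0, efinite (Reg E Dd psi c x0) /\ K x0 = y)
  (delta : nat -> R) (Hdpos : forall n, delta n > 0) (Hdcv : Un_cv delta 0)
  (yn : nat -> Y) (Hyn : forall n, ele (Dsim y (yn n)) (Fin (delta n)))
  (alpha : nat -> R) (Hapos : forall n, alpha n > 0) (Hacv : Un_cv alpha 0)
  (Hda : Un_cv (fun n => delta n / alpha n) 0)
  (x : nat -> X)
  (Hx : forall n z, ele (Tik K E Dd psi c Dsim (alpha n) (yn n) (x n))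
                        (Tik K E Dd psi c Dsim (alpha n) (yn n) z)) :
  (* (a) *)
  (exists (tau : nat -> nat) (xs : X), subseq_idx tau /\ weak_cv (fun n => x (tau n)) xs)
  /\ (* (b) *)
  (forall xs : X, (exists tau, subseq_idx tau /\ weak_cv (fun n => x (tau n)) xs) ->
     Rmin_solution K E Dd psi c y xs)
  /\ (* (c) *)
  (forall (tau : nat -> nat) (xs : X), subseq_idx tau -> weak_cv (fun n => x (tau n)) xs ->
     econv (fun n => Reg E Dd psi c (x (tau n))) (Reg E Dd psi c xs))
  /\ (* (d) *)
  (forall xdd : X, Rmin_solution K E Dd psi c y xdd ->
     (forall z, Rmin_solution K E Dd psi c y z -> z = xdd) ->
     weak_cv x xdd).
Proof.
  destruct HB as [Dnn [B1 [B2 [B3 [B4 B5]]]]].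
  assert (Rform : forall z, Reg E Dd psi c z = eadd (psi (E z)) (Fin (c / 2 * nsq (hsub z (Dd (E z)))))).
  { intro z. unfold Reg. rewrite hnorm_sq. reflexivity. }
  assert (Rnn : forall z, enonneg (Reg E Dd psi c z)).
  { intro z. rewrite Rform. pose proof (Hpsi_nonneg (E z)). pose proof (nsq_pos (hsub z (Dd (E z)))).
    destruct (psi (E z)); cbn [enonneg ele eadd] in *; auto. assert (0 <= c / 2 * nsq (hsub z (Dd (E z)))) by (apply Rmult_le_pos; lra). lra. }
  assert (KB : forall n z r, Reg E Dd psi c z = Fin r -> K z = y ->
     exists d q, Dsim (K (x n)) (yn n) = Fin d /\ Reg E Dd psi c (x n) = Fin q /\ 0 <= d /\ 0 <= q /\
       d + alpha n * q <= delta n + alpha n * r).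
  { intros n z r Hr Hz. pose proof (Hx n z) as Hxz. unfold Tik in Hxz. rewrite Hr, Hz in Hxz.
    pose proof (Hyn n) as Hy1. pose proof (Dnn (K (x n)) (yn n)) as Hd0. pose proof (Rnn (x n)) as Hq0.
    pose proof (Dnn y (yn n)) as He0.
    destruct (Dsim y (yn n)) as [e|]; [|contradiction].
    destruct (Dsim (K (x n)) (yn n)) as [d|]; destruct (Reg E Dd psi c (x n)) as [q|]; simpl in *; try contradiction.
    exists d, q. repeat split; auto. lra. }
  assert (QB : forall n z r, Reg E Dd psi c z = Fin r -> K z = y ->
     exists q, Reg E Dd psi c (x n) = Fin q /\ 0 <= q /\ q <= delta n / alpha n + r).
  { intros n z r Hr Hz. destruct (KB n z r Hr Hz) as [d [q [_ [Eq [Hd [Hq Hb]]]]]].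
    exists q. repeat split; auto. pose proof (Hapos n).
    apply Rmult_le_reg_l with (alpha n); [lra|]. rewrite Rmult_plus_distr_l.
    replace (alpha n * (delta n / alpha n)) with (delta n) by (field; lra). lra. }
  assert (DB : forall n z r, Reg E Dd psi c z = Fin r -> K z = y ->
     exists d, Dsim (K (x n)) (yn n) = Fin d /\ d <= delta n + alpha n * r).
  { intros n z r Hr Hz. destruct (KB n z r Hr Hz) as [d [q [Ed [_ [Hd [Hq Hb]]]]]].
    exists d. split; auto. pose proof (Hapos n). nra. }
  destruct Hy as [x0 [Hx0f Hx0]].
  destruct (Reg E Dd psi c x0) as [r0|] eqn:Er0; [|contradiction].
  destruct (cv_bounded _ _ Hda) as [Bq HBq].
  assert (PB : forall n, exists p, psi (E (x n)) = Fin p /\ 0 <= p /\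
            p + c / 2 * nsq (hsub (x n) (Dd (E (x n)))) <= Bq + r0).
  { intro n. destruct (QB n x0 r0 Er0 Hx0) as [q [Eq [Hq Hqb]]]. rewrite Rform in Eq.
    pose proof (Hpsi_nonneg (E (x n))) as Hp.
    destruct (psi (E (x n))) as [p|]; simpl in Eq; [|discriminate]. injection Eq as Eq.
    exists p. repeat split; auto. specialize (HBq n). lra. }
  assert (wc : forall tau : nat -> nat, exists s xs, subseq_idx s /\ weak_cv (fun n => x (tau (s n))) xs).
  { intro tau.
    destruct (Hpsi_coer (fun n => E (x (tau n)))) as [Bx HBx].
    { exists (Bq + r0). intro n. destruct (PB (tau n)) as [p [Ep [Hp Hpb]]]. rewrite Ep. simpl.
      pose proof (nsq_pos (hsub (x (tau n)) (Dd (E (x (tau n)))))).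
      assert (0 <= c / 2 * nsq (hsub (x (tau n)) (Dd (E (x (tau n)))))) by (apply Rmult_le_pos; lra). lra. }
    destruct (weak_compact (fun n => E (x (tau n))) (Bx * Bx)) as [s1 [xi [Hs1 Hxi]]].
    { intro n. rewrite <- hnorm_sq. specialize (HBx n). pose proof (sqrt_pos (hinner (E (x (tau n))) (E (x (tau n))))).
      unfold hnorm in *. simpl. nra. }
    destruct (weak_compact (fun n => hsub (x (tau (s1 n))) (Dd (E (x (tau (s1 n)))))) (2 * (Bq + r0) / c))
      as [s2 [w [Hs2 Hw]]].
    { intro n. destruct (PB (tau (s1 n))) as [p [Ep [Hp Hpb]]].
      apply Rmult_le_reg_l with (c / 2); [lra|]. replace (c / 2 * (2 * (Bq + r0) / c)) with (Bq + r0) by (field; lra).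
      lra. }
    exists (fun n => s1 (s2 n)), (hadd w (Dd xi)). split; [apply subseq_comp; auto|].
    apply (weak_cv_ext (fun n => hadd (hsub (x (tau (s1 (s2 n)))) (Dd (E (x (tau (s1 (s2 n)))))))
                                     (Dd (E (x (tau (s1 (s2 n)))))))).
    { intro n. apply veq. hexpand. hsym. ring. }
    apply weak_cv_add; [exact Hw|].
    apply (HD (fun n => E (x (tau (s1 (s2 n)))))).
    apply (weak_cv_subseq (fun n => E (x (tau (s1 n))))); auto. }
  assert (Rlsc : forall (v : nat -> X) l, weak_cv v l -> le_liminf (Reg E Dd psi c l) (fun n => Reg E Dd psi c (v n))).
  { intros v l Hv. apply (le_liminf_ext _ (fun n => eadd (psi (E (v n))) (Fin (c / 2 * nsq (hsub (v n) (Dd (E (v n)))))))).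
    { intro n. symmetry. apply Rform. }
    rewrite Rform. apply le_liminf_add.
    - apply (Hpsi_lsc (fun n => E (v n))). apply HE, Hv.
    - intros r Hr. destruct (nsq_lsc (fun n => hsub (v n) (Dd (E (v n)))) (hsub l (Dd (E l))) (r / (c / 2))) as [N HN].
      + apply weak_cv_sub; [exact Hv|]. apply (HD (fun n => E (v n))). apply HE, Hv.
      + apply Rmult_lt_reg_l with (c / 2); [lra|]. replace (c / 2 * (r / (c / 2))) with r by (field; lra). exact Hr.
      + exists N. intros n Hn. specialize (HN n Hn). simpl in HN.
        replace r with (c / 2 * (r / (c / 2))) by (field; lra). apply Rmult_lt_compat_l; [lra| exact HN]. }
  assert (Hys : strong_cv yn y).
  { apply B3. intros eps He. destruct (Hdcv eps He) as [N HN]. exists N. intros n Hn.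
    specialize (HN n Hn). pose proof (Hyn n). pose proof (Dnn y (yn n)).
    destruct (Dsim y (yn n)) as [s|]; [|contradiction]. exists s. split; auto. cbn [enonneg ele] in *.
    unfold Rdist in HN. rewrite Rminus_0_r in *. pose proof (Hdpos n). rewrite Rabs_right in HN by lra.
    rewrite Rabs_right by lra. lra. }
  assert (Hdr : Un_cv (fun n => delta n + alpha n * r0) 0).
  { replace 0 with (0 + 0 * r0) by ring. apply CV_plus; auto. apply CV_mult; auto. apply cv_const. }
  assert (partb : forall tau xs, subseq_idx tau -> weak_cv (fun n => x (tau n)) xs -> Rmin_solution K E Dd psi c y xs).
  { intros tau xs Htau Hw.
    assert (Kxs : K xs = y).
    { pose proof (B2 (fun n => K (x (tau n))) (fun n => yn (tau n)) (K xs) y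
         (HK (fun n => x (tau n)) xs Hw) (Un_cv_subseq (fun n => hnorm (hsub (yn n) y)) 0 tau Htau Hys)) as HL.
      assert (CL : forall r, 0 < r -> ~ elt (Fin r) (Dsim (K xs) y)).
      { intros r Hr Hel. destruct (eventually_and _ _ (HL r Hel)
           (cv_eventually_lt _ _ r (Un_cv_subseq _ _ tau Htau Hdr) Hr)) as [N HN].
        destruct (HN N (le_n _)) as [H1 H2]. destruct (DB (tau N) x0 r0 Er0 Hx0) as [d [Ed Hd]].
        rewrite Ed in H1. simpl in H1. lra. }
      apply B1. pose proof (Dnn (K xs) y) as Hn. destruct (Dsim (K xs) y) as [d0|].
      - cbn [enonneg ele] in Hn. destruct (Req_dec d0 0) as [->|Hne]; auto. exfalso. apply (CL (d0 / 2)); simpl; lra.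
      - exfalso. apply (CL 1); simpl; auto; lra. }
    assert (Hmin : forall z r, Reg E Dd psi c z = Fin r -> K z = y -> ele (Reg E Dd psi c xs) (Fin r)).
    { intros z r Hr Hz. apply NNPP. intro Hn. apply ele_not in Hn.
      assert (Hr' : exists r', r < r' /\ elt (Fin r') (Reg E Dd psi c xs)).
      { destruct (Reg E Dd psi c xs) as [t|]; simpl in *.
        - exists ((r + t) / 2). split; lra.
        - exists (r + 1). split; auto; lra. }
      destruct Hr' as [r' [Hrr Hel]].
      destruct (eventually_and _ _ (Rlsc _ _ Hw r' Hel)
           (cv_eventually_lt _ _ (r' - r) (Un_cv_subseq _ _ tau Htau Hda) ltac:(lra))) as [N HN].
      destruct (HN N (le_n _)) as [H1 H2]. destruct (QB (tau N) z r Hr Hz) as [q [Eq [_ Hq]]].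
      rewrite Eq in H1. simpl in H1. lra. }
    split; [|split; auto].
    - pose proof (Hmin x0 r0 Er0 Hx0). destruct (Reg E Dd psi c xs); simpl in *; auto.
    - intros z Hzf Hz. destruct (Reg E Dd psi c z) as [r|] eqn:Er; [|contradiction]. apply (Hmin z r Er Hz). }
  split; [|split; [intros xs [tau [Ht Hw]]; exact (partb tau xs Ht Hw)|split]].
  - destruct (wc (fun n => n)) as [s [xs [Hs Hw]]]. exists s, xs. auto.
  - intros tau xs Htau Hw. destruct (partb tau xs Htau Hw) as [Hf [Kxs Hm]].
    destruct (Reg E Dd psi c xs) as [t|] eqn:Et; [|contradiction]. simpl.
    intros eps He.
    destruct (eventually_and _ _ (Rlsc _ _ Hw (t - eps) ltac:(rewrite Et; simpl; lra))
           (cv_eventually_lt _ _ eps (Un_cv_subseq _ _ tau Htau Hda) He)) as [N HN].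
    exists N. intros n Hn. destruct (HN n Hn) as [H1 H2]. destruct (QB (tau n) xs t Et Kxs) as [q [Eq [_ Hq]]].
    rewrite Eq in H1 |- *. simpl in H1. exists q. split; auto. apply Rabs_def1; lra.
  - intros xdd Hsol Huniq. apply NNPP. intro Hn. apply not_all_ex_not in Hn as [z Hz].
    unfold Un_cv in Hz. apply not_all_ex_not in Hz as [eps Hz].
    apply imply_to_and in Hz as [He Hz].
    assert (G : forall N : nat, {n : nat | (N <= n)%nat /\ ~ Rdist (hinner (x n) z) (hinner xdd z) < eps}).
    { intro N. apply constructive_indefinite_description. apply NNPP. intro Hcn. apply Hz. exists N.
      intros n Hn. apply NNPP. intro Hd. apply Hcn. exists n. auto. }
    set (tau := fix f (k : nat) : nat := match k with
                | O => proj1_sig (G O)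
                | S k' => proj1_sig (G (S (f k'))) end).
    assert (Htau : subseq_idx tau).
    { intro n. simpl. pose proof (proj1 (proj2_sig (G (S (tau n))))). simpl in H. lia. }
    assert (Hbad : forall k, ~ Rdist (hinner (x (tau k)) z) (hinner xdd z) < eps).
    { intro k. destruct k; [exact (proj2 (proj2_sig (G O)))| exact (proj2 (proj2_sig (G (S (tau k)))))]. }
    destruct (wc tau) as [s [xs [Hs Hw]]].
    pose proof (partb (fun n => tau (s n)) xs (subseq_comp _ _ Htau Hs) Hw) as Hsx.
    rewrite (Huniq xs Hsx) in Hw. destruct (Hw z eps He) as [N HN].
    apply (Hbad (s N)). apply HN. lia.
Qed.
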